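(* Suppose there exist $i, d \ge 2$ such that $o(\alpha_d) + a_i \ge c_R$, $o(\alpha_d) < \infty$, and $o(\alpha_d) \le o(\alpha_i) \le \infty$. Then $R = k[[\widetilde{x}_1, \ldots, \widetilde{x}_n]]$ where $\widetilde{x}_j = x_j$ for $j \ne i$ and $\widetilde{x}_i = t^{a_i}$, and $\widetilde{x}_1,\ldots,\widetilde{x}_n$ are again Herzog–Kunz generators of $R$.
   Context: Let $k$ be an algebraically closed field of characteristic $0$ and let $(R,\mathfrak m)$ be a complete local noetherian domain of dimension $1$ containing $k$ with $R/\mathfrak m = k$; its normalization is $\overline R = k[[t]]$, $R \subseteq k[[t]]$ finite birational. Let $v$ be the $t$-adic valuation; for $A \subseteq k((t))$ let $v(A) = \{v(f): f\in A\setminus\{0\}\}$. The conductor is $\mathfrak C_R = \{x\in\overline R : x\overline R\subseteq R\} = t^{c_R}\overline R$, $c_R$ the conductor degree. The Herzog–Kunz sequence of $R$ is $v(\mathfrak m)\setminus v(\mathfrak m^2)$ listed increasingly as $a_1<\cdots<a_n$; Herzog–Kunz generators are $x_i \in R$ with $v(x_i)=a_i$ (these satisfy $R = k[[x_1,\ldots,x_n]]$). Fix Herzog–Kunz generators $x_1, \ldots, x_n$ with $x_1 = t^{a_1}$ and, for $i \ge 2$, $x_i = \alpha_i t^{a_i}$ with $\alpha_i \in k[[t]]$ a unit of constant term $1$. Define $o(\alpha_i) = v(\alpha_i - 1)$ (so $o(\alpha_i) = \infty$ if $\alpha_i = 1$). *)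

(* Defs.v *)
From HB Require Import structures.
From mathcomp Require Import all_boot all_order all_algebra.
Set Implicit Arguments. Unset Strict Implicit. Unset Printing Implicit Defensive.
Import Order.TTheory GRing.Theory Num.Theory.
Local Open Scope ring_scope.

(* k[[t]] : f n is the coefficient of t^n *)
Definition ps (k : fieldType) := nat -> k.

Section PS.
Variable k : fieldType.

Definition ps_const (c : k) : ps k := fun n => if n == 0%N then c else 0.
Definition ps_add (f g : ps k) : ps k := fun n => f n + g n.
Definition ps_opp (f : ps k) : ps k := fun n => - f n.
Definition ps_mul (f g : ps k) : ps k :=
  fun n => \sum_(j < n.+1) f j * g (n - j)%N.
Definition ps_tpow (a : nat) : ps k := fun n => if n == a then 1 else 0.

(* v(f) >= N, i.e. f \in t^N k[[t]] (N = 0 always holds; f = 0 satisfies it for all N) *)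
Definition vge (f : ps k) (N : nat) : Prop := forall j, (j < N)%N -> f j = 0.
Definition has_val (f : ps k) (e : nat) : Prop := vge f e /\ f e <> 0.

Definition in_vset (A : ps k -> Prop) (e : nat) : Prop :=
  exists f, A f /\ has_val f e.

Definition is_k_subalg (S : ps k -> Prop) : Prop :=
  (forall c, S (ps_const c)) /\
  (forall f g, S f -> S g -> S (ps_add f g)) /\
  (forall f g, S f -> S g -> S (ps_mul f g)).

Definition tadic_closed (S : ps k -> Prop) : Prop :=
  forall f, (forall N, exists g, S g /\ forall j, (j < N)%N -> f j = g j) -> S f.

(* k[[y_1,...,y_n]] : the smallest t-adically closed k-subalgebra of k[[t]]
   containing y_1, ..., y_n *)
Definition kgen (n : nat) (y : nat -> ps k) (f : ps k) : Prop :=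
  forall S, is_k_subalg S -> tadic_closed S ->
    (forall j, (1 <= j <= n)%N -> S (y j)) -> S f.

Definition max_ideal (R : ps k -> Prop) (f : ps k) : Prop := R f /\ f 0%N = 0.

(* m^2 : the ideal generated by products of elements of m, i.e. the set of
   finite sums of such products (smallest additive set containing them) *)
Definition ideal_sq (m : ps k -> Prop) (f : ps k) : Prop :=
  forall S, S (ps_const 0) ->
    (forall g h, m g -> m h -> S (ps_mul g h)) ->
    (forall a b, S a -> S b -> S (ps_add a b)) -> S f.

Definition conductor_deg (R : ps k -> Prop) (c : nat) : Prop :=
  forall x, (forall y, R (ps_mul x y)) <-> vge x c.

Definition HK_sequence (R : ps k -> Prop) (n : nat) (a : nat -> nat) : Prop :=
  (forall j, (1 <= j)%N -> (j < n)%N -> (a j < a j.+1)%N) /\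
  (forall e, (in_vset (max_ideal R) e /\ ~ in_vset (ideal_sq (max_ideal R)) e)
             <-> exists j, [/\ (1 <= j)%N, (j <= n)%N & a j = e]).

Definition HK_generators (R : ps k -> Prop) (n : nat) (a : nat -> nat)
  (y : nat -> ps k) : Prop :=
  forall j, (1 <= j <= n)%N -> R (y j) /\ has_val (y j) (a j).

End PS.

(* Main.v *)
Require Import Defs.
From HB Require Import structures.
From mathcomp Require Import all_boot all_order all_algebra.
From Stdlib Require Import Classical FunctionalExtensionality.
From mathcomp Require Import zify ring.
Import Order.TTheory GRing.Theory Num.Theory.
Local Open Scope ring_scope.
Section H.
Variable k : fieldType.
Implicit Types f g : ps k.

Lemma mul_const_l c f j : ps_mul (ps_const c) f j = c * f j.
Proof.
rewrite /ps_mul big_ord_recl /= subn0 /ps_const eqxx big1 ?addr0 //.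
by move=> l _; rewrite /bump /= mul0r.
Qed.

Lemma mul_const_r c f j : ps_mul f (ps_const c) j = f j * c.
Proof.
rewrite /ps_mul big_ord_recr /= subnn /ps_const eqxx big1 ?add0r //.
move=> l _ /=; have -> : (j - l == 0)%N = false.
  by have := ltn_ord l; apply: contraTF => /eqP; lia.
by rewrite mulr0.
Qed.

Lemma mul_tpow_r f a j :
  ps_mul f (ps_tpow k a) j = if (a <= j)%N then f (j - a)%N else 0.
Proof.
rewrite /ps_mul /ps_tpow; case: leqP => Haj.
  have Hl : (j - a < j.+1)%N by rewrite ltnS leq_subr.
  rewrite (bigD1 (Ordinal Hl)) //= subKn // eqxx mulr1 big1 ?addr0 //.
  move=> l /eqP Hne; case: eqP => // Hja; last by rewrite mulr0.
  exfalso; apply: Hne; apply: val_inj => /=.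
  have := ltn_ord l; rewrite ltnS => Hlj; lia.
rewrite big1 // => l _; case: eqP => // Hja; last by rewrite mulr0.
have := ltn_ord l; lia.
Qed.

Lemma mul0_at f g : f 0%N = 0 -> ps_mul f g 0%N = 0.
Proof. by move=> H; rewrite /ps_mul big_ord_recl big_ord0 /= H mul0r addr0. Qed.

End H.
Section G.
Variable k : fieldType.
Variable R : ps k -> Prop.
Hypothesis hR : is_k_subalg R.
Variables (n : nat) (a : nat -> nat) (y : nat -> ps k).
Hypothesis ha : HK_sequence R n a.
Hypothesis hy : HK_generators R n a y.
Variable S : ps k -> Prop.
Hypothesis hS : is_k_subalg S.
Hypothesis hyS : forall j, (1 <= j <= n)%N -> S (y j).

Definition agree N (f g : ps k) := forall j, (j < N)%N -> f j = g j.

Lemma const0_at (c : k) j : ps_const c j = if j == 0%N then c else 0.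
Proof. by []. Qed.

Lemma sq_R h : ideal_sq (max_ideal R) h -> R h.
Proof.
case: hR => H1 [H2 H3]; apply => //.
by move=> g1 h1 [] ? _ [] ? _; apply: H3.
Qed.

Lemma sq_approx N (IH : forall f, R f -> exists g, S g /\ agree N f g) h :
  ideal_sq (max_ideal R) h -> exists u, S u /\ agree N.+1 h u.
Proof.
case: hS => S1 [S2 S3].
move=> Hh; apply: (Hh (fun h => exists u, S u /\ agree N.+1 h u)).
- exists (ps_const 0); split => // j _; done.
- move=> g1 h1 [Rg g0] [Rh h0].
  case: N IH => [|N] IH.
    exists (ps_const 0); split => // j; rewrite ltnS leqn0 => /eqP ->.
    by rewrite mul0_at // const0_at.
  have [p [Sp Hp]] := IH _ Rg; have [q [Sq Hq]] := IH _ Rh.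
  exists (ps_mul p q); split; first by apply: S3.
  move=> j Hj; rewrite /ps_mul; apply: eq_bigr => l _.
  have Hl := ltn_ord l.
  case: (eqVneq (nat_of_ord l) 0%N) => [->|Hl0].
    by rewrite g0 -Hp // g0 !mul0r.
  case: (eqVneq (j - l)%N 0%N) => [->|Hjl].
    by rewrite h0 -Hq // h0 !mulr0.
  rewrite Hp ?Hq //; lia.
- move=> a1 b1 [u1 [Su1 H1]] [u2 [Su2 H2]].
  exists (ps_add u1 u2); split; first by apply: S2.
  by move=> j Hj; rewrite /ps_add H1 ?H2.
Qed.

Lemma step N (IH : forall f, R f -> exists g, S g /\ agree N f g) e f :
  (e < N.+1)%N -> R f -> has_val f e ->
  exists w, R w /\ has_val w e /\ exists u, S u /\ agree N.+1 w u.
Proof.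
move=> He Rf [Hv Hfe].
case: e He Hv Hfe => [|e] He Hv Hfe.
  exists (ps_const 1); split; first by case: hR.
  split; first by split => //; rewrite const0_at /=; apply/eqP; exact: oner_neq0.
  by exists (ps_const 1); split => //; case: hS.
have mf : max_ideal R f by split => //; apply: Hv.
case: (classic (in_vset (ideal_sq (max_ideal R)) e.+1)) => [[h [hh hv]]|Hn].
  exists h; split; first by apply: sq_R.
  split => //; exact: sq_approx.
have [j [H1 H2 H3]] : exists j, [/\ (1 <= j)%N, (j <= n)%N & a j = e.+1].
  by apply ha.2; split => //; exists f.
have Hj : (1 <= j <= n)%N by rewrite H1 H2.
have [Ry hv] := @hy j Hj.
exists (y j); split => //; split; first by rewrite -H3.
by exists (y j); split => //; apply: hyS.
Qed.

Lemma down N (IH : forall f, R f -> exists g, S g /\ agree N f g) m :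
  forall f, R f -> vge f (N.+1 - m) -> exists g, S g /\ agree N.+1 f g.
Proof.
have [R1 [R2 R3]] := hR; have [S1 [S2 S3]] := hS.
elim: m => [|m IHm] f Rf Hv.
  exists (ps_const 0); split => // j Hj; rewrite Hv; last by rewrite subn0.
  by rewrite const0_at; case: ifP.
case: (leqP N.+1 m) => Hm.
  apply: IHm => //; have -> : (N.+1 - m = 0)%N by lia.
  by move=> j.
set e := (N.+1 - m.+1)%N.
have He : (e.+1 = N.+1 - m)%N by rewrite /e; lia.
case: (eqVneq (f e) 0) => Hfe.
  apply: IHm => //; rewrite -He => j; rewrite ltnS leq_eqVlt.
  by case/orP => [/eqP ->|]; [|apply: Hv].
have [w [Rw [[wv we] [u [Su Hu]]]]] :=
  @step N IH e f ltac:(rewrite /e; lia) Rf (conj Hv (elimN eqP Hfe)).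
set lam := f e / w e.
set f' := ps_add f (ps_mul (ps_const (- lam)) w).
have Rf' : R f' by apply: R2 => //; apply: R3.
have [g' [Sg' Hg']] : exists g, S g /\ agree N.+1 f' g.
  apply: IHm => //; rewrite -He => j; rewrite ltnS leq_eqVlt.
  case/orP => [/eqP ->|Hj].
    rewrite /f' /ps_add mul_const_l /lam mulNr divfK //; first exact: subrr.
    by apply/eqP.
  by rewrite /f' /ps_add mul_const_l Hv // wv // mulr0 addr0.
exists (ps_add g' (ps_mul (ps_const lam) u)); split.
  by apply: S2 => //; apply: S3.
move=> j Hj; rewrite /ps_add mul_const_l -Hg' // -Hu //.
rewrite /f' /ps_add mul_const_l; ring.
Qed.

Lemma claim N : forall f, R f -> exists g, S g /\ agree N f g.
Proof.
elim: N => [|N IH] f Rf.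
  by exists (ps_const 0); split => //; case: hS.
by apply: (@down N IH N.+1) => //; rewrite subnn => j.
Qed.

Lemma gen_sub f : tadic_closed S -> R f -> S f.
Proof. by move=> Hc Rf; apply: Hc => N; have := @claim N f Rf. Qed.

End G.
Theorem mainTheorem9
  (k : closedFieldType) (hchar : [pchar k] =i pred0)
  (R : ps k -> Prop) (hR : is_k_subalg R)
  (c : nat) (hc : conductor_deg R c)
  (n : nat) (a : nat -> nat) (ha : HK_sequence R n a)
  (x alpha : nat -> ps k)
  (hxgen : HK_generators R n a x)
  (hx1 : x 1%N = ps_tpow k (a 1%N))
  (hxj : forall j, (2 <= j <= n)%N ->
           x j = ps_mul (alpha j) (ps_tpow k (a j)) /\ alpha j 0%N = 1)
  (i d : nat) (hi : (2 <= i <= n)%N) (hd : (2 <= d <= n)%N)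
  (e : nat) (he : has_val (ps_add (alpha d) (ps_opp (ps_const 1))) e)
  (hec : (c <= e + a i)%N)
  (hei : vge (ps_add (alpha i) (ps_opp (ps_const 1))) e) :
  let xt := fun j => if j == i then ps_tpow k (a i) else x j in
  (forall f, R f <-> kgen n xt f) /\ HK_generators R n a xt.
Proof.
move=> xt.
have [R1 [R2 R3]] := hR.
have hcl : tadic_closed R.
  move=> f Hf; have [g [Rg Hg]] := Hf c.
  set D := ps_add f (ps_mul (ps_const (-1)) g).
  have HD : vge D c by move=> j Hj; rewrite /D /ps_add mul_const_l Hg //; ring.
  have RD := (hc D).2 HD (ps_const 1).
  have -> : f = ps_add g (ps_mul D (ps_const 1)).
    apply: functional_extensionality => j.
    by rewrite /ps_add mul_const_r /D /ps_add mul_const_l; ring.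
  exact: R2.
have hi1 : (1 <= i <= n)%N by lia.
have Rxi := (hxgen i hi1).1.
have Rt : R (ps_tpow k (a i)).
  set D := ps_add (x i) (ps_mul (ps_const (-1)) (ps_tpow k (a i))).
  have HD : vge D c.
    move=> j Hj; rewrite /D /ps_add mul_const_l (hxj i hi).1 mul_tpow_r.
    rewrite /ps_tpow; case: leqP => Haj.
      have := hei (j - a i)%N ltac:(lia).
      rewrite /ps_add /ps_opp const0_at.
      have -> : (j == a i) = (j - a i == 0)%N.
        apply/eqP/eqP; lia.
      case: ifP => _ H.
        have -> : alpha i (j - a i)%N = 1 by apply/eqP; rewrite -subr_eq0; apply/eqP.
        by ring.
      have -> : alpha i (j - a i)%N = 0 by rewrite -H; ring.
      by ring.
    have -> : (j == a i) = false by apply/eqP; lia.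
    by ring.
  have RD := (hc D).2 HD (ps_const 1).
  have -> : ps_tpow k (a i) = ps_add (x i) (ps_mul (ps_const (-1)) (ps_mul D (ps_const 1))).
    apply: functional_extensionality => j.
    by rewrite /ps_add !mul_const_l mul_const_r /D /ps_add mul_const_l; ring.
  by apply: R2 => //; apply: R3.
have hxt : HK_generators R n a xt.
  move=> j Hj; rewrite /xt; case: eqP => [->|_]; last exact: hxgen.
  split => //; split.
    by move=> l Hl; rewrite /ps_tpow; case: eqP => // E; lia.
  rewrite /ps_tpow eqxx; apply/eqP; exact: oner_neq0.
split => // f; split => Hf.
  apply: (@gen_sub _ R hR n a xt ha hxt (kgen n xt)) => //.
  - split; [|split].
    + by move=> c0 S HS HSc Hy; apply HS.
    + move=> f1 g0 Hf1 Hg S HS HSc Hy; case: (HS) => _ [H2 _]; apply: H2; [apply: Hf1|apply: Hg] => //.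
    + move=> f1 g0 Hf1 Hg S HS HSc Hy; case: (HS) => _ [_ H3]; apply: H3; [apply: Hf1|apply: Hg] => //.
  - by move=> j Hj S HS HSc Hy; apply: Hy.
  - move=> g Hg S HS HSc0 Hy; apply: (HSc0) => N.
    have [g' [Hg' Hgg]] := Hg N; exists g'; split => //; exact: Hg' S HS HSc0 Hy.
by apply: Hf => // j Hj; have [] := hxt j Hj.
Qed.
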